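(* Let $a_1,a_2\in\mathbb R$ and set $b_1=a_1-a_2$, $b_2=a_1-1$. Then $(a_1,a_2)$ is a good pair if and only if $(b_1,b_2)$ is a good pair.
   Context: For $x\in\mathbb R$, $[x]_2$ denotes the unique number in $[-1,1)$ congruent to $x$ modulo $2\mathbb Z$. A pair $(a_1,a_2)$ of real numbers is a good pair if none of $a_1,a_2,a_1-a_2$ is an integer and $[a_1]_2\,[a_2]_2>0$ and $|[a_1]_2|<|[a_2]_2|$. *)

(* Defs.v *)
From Stdlib Require Import Reals.
Open Scope R_scope.

Definition is_int (x : R) : Prop := exists z : Z, x = IZR z.

(* [x]_2 : the unique number in [-1,1) congruent to x modulo 2Z,
   namely x - 2 * floor((x+1)/2). *)
Definition red2 (x : R) : R := x - 2 * IZR (Int_part ((x + 1) / 2)).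

Definition good_pair (a1 a2 : R) : Prop :=
  ~ is_int a1 /\ ~ is_int a2 /\ ~ is_int (a1 - a2) /\
  red2 a1 * red2 a2 > 0 /\ Rabs (red2 a1) < Rabs (red2 a2).

(* Main.v *)
Require Import Defs.
From Stdlib Require Import Reals Lra Lia.
Open Scope R_scope.

Lemma red2_spec x : (-1 <= red2 x < 1) /\ exists k, x = red2 x + 2 * IZR k.
Proof.
  unfold red2. destruct (base_Int_part ((x+1)/2)) as [A B].
  split; [split|]; [lra|lra|]. exists (Int_part ((x + 1) / 2)). ring.
Qed.

Lemma red2_uniq x t k : -1 <= t < 1 -> x = t + 2 * IZR k -> red2 x = t.
Proof.
  intros Ht Hx. destruct (red2_spec x) as [Hr [n Hn]].
  assert (E: red2 x - t = 2 * IZR (k - n)) by (rewrite minus_IZR; lra).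
  assert (IZR (k-n) < 1) by lra. assert (-1 < IZR (k-n)) by lra.
  apply lt_IZR in H. apply lt_IZR in H0.
  assert (k - n = 0)%Z by lia. rewrite H1 in E. simpl in E. lra.
Qed.

Lemma is_int_shift u v z : u = v + IZR z -> (is_int u <-> is_int v).
Proof.
  intros E; unfold is_int; split; intros [w Hw].
  - exists (w - z)%Z. rewrite minus_IZR. lra.
  - exists (w + z)%Z. rewrite plus_IZR. lra.
Qed.

Lemma small_int t : -3 < t < 3 ->
  (is_int t <-> t = -2 \/ t = -1 \/ t = 0 \/ t = 1 \/ t = 2).
Proof.
  intros H; split.
  - intros [z Hz]. subst. assert (-3 < z < 3)%Z by (split; apply lt_IZR; lra).
    assert (z = -2 \/ z = -1 \/ z = 0 \/ z = 1 \/ z = 2)%Z as D by lia.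
    destruct D as [->|[->|[->|[->| ->]]]]; simpl; lra.
  - intros [E|[E|[E|[E|E]]]]; [exists (-2)%Z|exists (-1)%Z|exists 0%Z|exists 1%Z|exists 2%Z];
    rewrite E; simpl; lra.
Qed.

Lemma prod_pos a b : a * b > 0 <-> (a > 0 /\ b > 0) \/ (a < 0 /\ b < 0).
Proof.
  split.
  - intros H. destruct (Rtotal_order a 0) as [Ha|[Ha|Ha]];
    destruct (Rtotal_order b 0) as [Hb|[Hb|Hb]]; try (subst; lra).
    all: try (left; lra); try (right; lra); nra.
  - intros [[A B]|[A B]]; nra.
Qed.

Theorem lemma6p1 (a1 a2 : R) :
  good_pair a1 a2 <-> good_pair (a1 - a2) (a1 - 1).
Proof.
  destruct (red2_spec a1) as [Hx [m Hm]]. set (x := red2 a1) in *.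
  destruct (red2_spec a2) as [Hy [p Hp]]. set (y := red2 a2) in *.
  unfold good_pair. fold x y.
  rewrite (is_int_shift a1 x (2*m)) by (rewrite mult_IZR; lra).
  rewrite (is_int_shift a2 y (2*p)) by (rewrite mult_IZR; lra).
  rewrite (is_int_shift (a1 - a2) (x - y) (2*m - 2*p)) by (rewrite minus_IZR, !mult_IZR; lra).
  rewrite (is_int_shift (a1 - 1) (x - 1) (2*m)) by (rewrite mult_IZR; lra).
  rewrite (is_int_shift (a1 - a2 - (a1 - 1)) (1 - y) (- (2*p))) by (rewrite opp_IZR, mult_IZR; lra).
  rewrite !small_int by lra.
  rewrite !prod_pos.
  assert (R1 : red2 (a1 - 1) = if Rlt_dec x 0 then x + 1 else x - 1).
  { destruct (Rlt_dec x 0).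
    - apply red2_uniq with (m - 1)%Z; [lra| rewrite minus_IZR; simpl; lra].
    - apply red2_uniq with m; lra. }
  assert (R2 : red2 (a1 - a2) =
     if Rlt_dec (x - y) (-1) then x - y + 2 else if Rlt_dec (x - y) 1 then x - y else x - y - 2).
  { destruct (Rlt_dec (x - y) (-1)).
    - apply red2_uniq with (m - p - 1)%Z; [lra| rewrite !minus_IZR; simpl; lra].
    - destruct (Rlt_dec (x - y) 1).
      + apply red2_uniq with (m - p)%Z; [lra| rewrite !minus_IZR; simpl; lra].
      + apply red2_uniq with (m - p + 1)%Z; [lra| rewrite plus_IZR, !minus_IZR; simpl; lra]. }
  rewrite R1, R2.
  destruct (Rlt_dec x 0); destruct (Rlt_dec (x - y) (-1)); try destruct (Rlt_dec (x - y) 1);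
  unfold Rabs; repeat destruct Rcase_abs; split; intuition lra.
Qed.
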